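(* Let $\mathcal M$ be the set of all episodic MDPs with rewards bounded in $[-R_{\max},R_{\max}]$ satisfying $\sum_{t=0}^\infty\Pr(S_t\neq s_\infty)<\infty$ for every policy $\pi$. Then for every $\gamma<1$ there is no objective $J_?$ (assigning to each MDP $M\in\mathcal M$ and differentiable parameterized policy $\pi^\theta$ a real-valued function of $\theta$) such that for all $M\in\mathcal M$, $$\nabla J_?(\theta)=\mathbb E\left[\sum_{t=0}^{\infty}\psi^\theta(S_t,A_t)\,Q^\theta_\gamma(S_t,A_t)\,\middle|\,\theta\right].$$
   Context: An MDP is a tuple $(\mathcal S,\mathcal A,P,R,d_0,\gamma)$ with discrete state set $\mathcal S$, discrete action set $\mathcal A$, transition function $P:\mathcal S\times\mathcal A\times\mathcal S\to[0,1]$, expected reward function $R:\mathcal S\times\mathcal A\to[-R_{\max},R_{\max}]$, initial state distribution $d_0$, and discount factor $\gamma\in[0,1]$. At each time $t=0,1,2,\dots$ the agent observes $S_t$ (with $S_0\sim d_0$), takes $A_t\sim\pi^\theta(S_t,\cdot)$, transitions to $S_{t+1}\sim P(S_t,A_t,\cdot)$, and receives reward $R_t$ with expectation $R(S_t,A_t)$. Episodic: there is a terminal absorbing state $s_\infty$ which, once entered, is never left and yields reward $0$ forever. A parameterized policy $\pi^\theta:\mathcal S\times\mathcal A\to[0,1]$ gives action probabilities as a function of a parameter vector $\theta$; conditioning on $\theta$ means actions are drawn from $\pi^\theta$. Compatible features: $\psi^\theta(s,a):=\frac{\partial}{\partial\theta}\ln\pi^\theta(s,a)$. Action-value function: $Q^\theta_\gamma(s,a):=\mathbb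 E[\sum_{k=0}^\infty\gamma^kR_{t+k}\mid S_t=s,A_t=a,\theta]$. Here $\nabla$ denotes the gradient with respect to $\theta$. *)

(* Defs.v *)
From HB Require Import structures.
From mathcomp Require Import all_boot all_order all_algebra.
From mathcomp Require Import all_classical all_reals all_analysis.
Set Implicit Arguments. Unset Strict Implicit. Unset Printing Implicit Defensive.
Import Order.TTheory GRing.Theory Num.Theory.
Import numFieldNormedType.Exports.
Local Open Scope ring_scope.

Section MDP.
Variable R : realType.
Variables S A : finType.

Record mdp := MDP {
  trans : S -> A -> S -> R;
  rew   : S -> A -> R;        (* expected reward R(s,a) *)
  init  : S -> R;
  sinf  : S
}.

Definition is_distr (mu : S -> R) := (forall s, 0 <= mu s) /\ \sum_s mu s = 1.

Definition policy := S -> A -> R.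
Definition is_policy (pi : policy) :=
  forall s, (forall a, 0 <= pi s a) /\ \sum_a pi s a = 1.

(* sdist M pi mu t s = Pr(S_t = s) when S_0 ~ mu and actions drawn from pi *)
Fixpoint sdist (M : mdp) (pi : policy) (mu : S -> R) (t : nat) : S -> R :=
  match t with
  | 0 => mu
  | t'.+1 => fun s' => \sum_s \sum_a sdist M pi mu t' s * pi s a * trans M s a s'
  end.

Definition prob_nonterm (M : mdp) (pi : policy) (t : nat) : R :=
  \sum_(s | s != sinf M) sdist M pi (init M) t s.

Definition in_class (Rmax : R) (M : mdp) : Prop :=
  (forall s a, is_distr (trans M s a)) /\
      is_distr (init M) /\
      (forall a, trans M (sinf M) a (sinf M) = 1) /\
      (forall a, rew M (sinf M) a = 0) /\
      (forall s a, - Rmax <= rew M s a <= Rmax) /\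
      (forall pi, is_policy pi -> cvgn (series (prob_nonterm M pi))).

Definition exp_rew (M : mdp) (pi : policy) (s : S) : R :=
  \sum_a pi s a * rew M s a.

(* Q^pi_gamma(s,a) = sum_k gamma^k E[R_{t+k} | S_t = s, A_t = a] *)
Definition Qval (gamma : R) (M : mdp) (pi : policy) (s : S) (a : A) : R :=
  rew M s a +
  limn (series (fun k : nat => gamma ^+ k.+1 *
      \sum_s' sdist M pi (trans M s a) k s' * exp_rew M pi s')).

Definition ppolicy (n : nat) := 'rV[R]_n -> S -> A -> R.

Definition is_diff_ppolicy (n : nat) (pt : ppolicy n) : Prop :=
  forall th, is_policy (pt th) /\
    forall s a, differentiable (fun th' : 'rV[R]_n => pt th' s a) th.

(* psi^theta(s,a) . v, with psi = d/dtheta ln pi^theta(s,a) *)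
Definition psi_dir (n : nat) (pt : ppolicy n) (th : 'rV[R]_n) (s : S) (a : A)
  (v : 'rV[R]_n) : R :=
  'd (fun th' : 'rV[R]_n => ln (pt th' s a)) th v.

Definition update_dir (gamma : R) (M : mdp) (n : nat) (pt : ppolicy n)
  (th v : 'rV[R]_n) : R :=
  limn (series (fun t : nat =>
     \sum_s \sum_a (sdist M (pt th) (init M) t s * pt th s a *
                    psi_dir pt th s a v * Qval gamma M (pt th) s a))).

End MDP.

(* Main.v *)
Require Import Defs.
From HB Require Import structures.
From mathcomp Require Import all_boot all_order all_algebra.
From mathcomp Require Import all_classical all_reals all_analysis.
From mathcomp Require Import lra ring.
Import Order.TTheory GRing.Theory Num.Theory.
Import numFieldNormedType.Exports.
Local Open Scope classical_set_scope.
Local Open Scope ring_scope.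

Section Aux.
Variable R : realType.

Lemma series_ev0 (u : nat -> R) N : (forall k, (N <= k)%N -> u k = 0) ->
  series u @ \oo --> \sum_(k < N) u k.
Proof.
move=> H; apply: cvg_near_cst; exists N => // n /= HN.
rewrite /series /= (big_cat_nat (leq0n N) HN) /= big_mkord.
rewrite [X in _ + X = _]big_nat_cond [X in _ + X = _]big1 ?addr0 // => k /andP[/andP[Hk _] _].
exact: H.
Qed.

Lemma lim_series_ev0 (u : nat -> R) N : (forall k, (N <= k)%N -> u k = 0) ->
  limn (series u) = \sum_(k < N) u k.
Proof. by move=> H; apply: cvg_lim => //; apply: series_ev0. Qed.

Lemma line_deriv (V : normedModType R) (f : V -> R) (a v : V) (t : R) :
  differentiable f (a + t *: v) ->
  is_derive t 1 (fun s => f (a + s *: v)) ('d f (a + t *: v) v).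
Proof.
move=> df.
have E : (fun h : R => h^-1 *: (((fun s => f (a + s *: v)) \o shift t) (h *: 1) - f (a + t *: v)))
   = (fun h : R => h^-1 *: ((f \o shift (a + t *: v)) (h *: v) - f (a + t *: v))).
  apply/funext => h /=; congr (_ *: (f _ - _)).
  by rewrite [h%:A]mulr1 scalerDl addrCA.
have dv : derivable f (a + t *: v) v by apply: diff_derivable.
apply: DeriveDef.
  by rewrite /derivable E.
by rewrite -deriveE // /derive E.
Qed.


Definition fA (b : bool) (x : R) : R := if b then (2 + sin x) / 4 else (2 - sin x) / 4.
Definition dA (b : bool) (x : R) : R := if b then cos x / 4 else - cos x / 4.

Lemma fA_gt0 (b : bool) (x : R) : 0 < fA b x.
Proof.
have h1 := sin_le1 x; have h2 := sin_geN1 x.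
case: b => /=; lra.
Qed.

Lemma fA_der (b : bool) (x : R) : is_derive x 1 (fA b) (dA b x).
Proof.
case: b => /=.
  have -> : fA true = 4^-1 \*: (cst 2 + @sin R).
    by apply/funext => y; rewrite /fA /= mulrC.
  apply: is_derive_eq.
  by rewrite /dA add0r /GRing.scale /= mulrC.
have -> : fA false = 4^-1 \*: (cst 2 - @sin R).
  by apply/funext => y; rewrite /fA /= mulrC.
apply: is_derive_eq.
by rewrite /dA sub0r /GRing.scale /= mulrC mulNr.
Qed.

Definition coordL (j : 'I_2) : {linear 'rV[R]_2 -> R}.
by exists (fun N : 'rV[R]_2 => N ord0 j); do 2![eexists]; do ?[constructor];
     rewrite ?mxE// => ? *; rewrite ?mxE//; move=> ?; rewrite !mxE.
Defined.

Lemma coordL_cont j : continuous (coordL j).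
Proof. exact: coord_continuous. Qed.

Lemma psi_coord (j : 'I_2) (f df : R -> R) (th v : 'rV[R]_2) :
  (forall x : R, 0 < f x) -> (forall x : R, is_derive x (1:R) f (df x)) ->
  f (th ord0 j) * 'd (fun th' : 'rV[R]_2 => ln (f (th' ord0 j))) th v
  = v ord0 j * df (th ord0 j).
Proof.
move=> fpos fder.
have Hg : is_derive (th ord0 j) 1 (@ln R \o f) ((f (th ord0 j))^-1 * df (th ord0 j)).
  apply: is_derive1_comp.
  exact: is_derive1_ln (fpos _).
have -> : (fun th' : 'rV[R]_2 => ln (f (th' ord0 j))) = (@ln R \o f) \o coordL j by [].
rewrite diff_comp; last first.
- by apply/derivable1_diffP; case: Hg.
- exact/linear_differentiable/coordL_cont.
rewrite diff_lin; last exact: coordL_cont.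
rewrite /= deriv1E; last by case: Hg.
rewrite derive1E derive_val /=.
have := fpos (th ord0 j); rewrite /GRing.scale /=.
move=> hp; field; lra.
Qed.

Local Notation s0 := (@Ordinal 4 0 isT).
Local Notation s1 := (@Ordinal 4 1 isT).
Local Notation s2 := (@Ordinal 4 2 isT).
Local Notation s3 := (@Ordinal 4 3 isT).
Local Notation i1 := (@Ordinal 2 1 isT).

Lemma sum4 (F : 'I_4 -> R) : \sum_(s : 'I_4) F s = F s0 + F s1 + F s2 + F s3.
Proof.
rewrite !big_ord_recl big_ord0 addr0 !addrA.
by congr (_ + _ + _ + _); congr F; apply: val_inj.
Qed.

Lemma sum3 (F : nat -> R) : \sum_(k < 3) F k = F 0%N + F 1%N + F 2%N.
Proof. by rewrite !big_ord_recl big_ord0 addr0 !addrA. Qed.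

Variables (g Rmax : R).

Definition tr (s : 'I_4) (a : bool) (s' : 'I_4) : R :=
  match nat_of_ord s with
  | 0 => if a then (if nat_of_ord s' == 2%N then 1 else 0)
         else (if nat_of_ord s' == 1%N then g else if nat_of_ord s' == 3%N then 1 - g else 0)
  | 1 => if nat_of_ord s' == 3%N then 1 else 0
  | 2 => if nat_of_ord s' == 1%N then 1 else 0
  | _ => if nat_of_ord s' == 3%N then 1 else 0
  end.
Definition rw (s : 'I_4) (a : bool) : R := if (nat_of_ord s == 1%N) && a then Rmax else 0.
Definition ini (s : 'I_4) : R := if nat_of_ord s == 0%N then 1 else 0.
Definition MM : mdp R 'I_4 bool := MDP tr rw ini s3.

Definition pt : ppolicy R 'I_4 bool 2 := fun th s a =>
  match nat_of_ord s with
  | 0 => fA a (th ord0 ord0)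
  | 1 => fA a (th ord0 i1)
  | _ => 1/2
  end.

Section SD.
Variables (pi : policy R 'I_4 bool) (mu : 'I_4 -> R).

Lemma sd0 : sdist MM pi mu 0 = mu. Proof. by []. Qed.

Lemma sdS0 t : sdist MM pi mu t.+1 s0 = 0.
Proof. rewrite /= sum4 !big_bool /= /tr /=; ring. Qed.

Lemma sdS2 t : sdist MM pi mu t.+1 s2 = sdist MM pi mu t s0 * pi s0 true.
Proof. rewrite /= sum4 !big_bool /= /tr /=; ring. Qed.

Lemma sdS1 t : sdist MM pi mu t.+1 s1 =
  sdist MM pi mu t s0 * pi s0 false * g + sdist MM pi mu t s2 * (pi s2 true + pi s2 false).
Proof. rewrite /= sum4 !big_bool /= /tr /=; ring. Qed.

Lemma sdlate t : sdist MM pi mu t.+3 s1 = 0.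
Proof. by rewrite sdS1 sdS0 sdS2 sdS0; ring. Qed.

Lemma sdlate0 t : sdist MM pi mu t.+3 s0 = 0.
Proof. exact: sdS0. Qed.

Lemma sdlate2 t : sdist MM pi mu t.+3 s2 = 0.
Proof. by rewrite sdS2 sdS0; ring. Qed.

End SD.

Lemma pn_late pi t : prob_nonterm MM pi t.+3 = 0.
Proof.
rewrite /prob_nonterm big_mkcond sum4.
rewrite sdlate sdlate0 sdlate2.
have -> : sinf MM = s3 by [].
rewrite eqxx /=.
by rewrite !addr0.
Qed.

Lemma inclass : 0 < Rmax -> 0 <= g < 1 -> in_class Rmax MM.
Proof.
move=> HR /andP[g0 g1].
split; [|split; [|split; [|split; [|split]]]].
- move=> s a; split.
    move=> s'; case: s => [[|[|[|[|m]]]] Hm] //=; case: s' => [[|[|[|[|m']]]] Hm'] //=;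
      rewrite /tr /=; case: a => //=; lra.
  rewrite sum4; case: s => [[|[|[|[|m]]]] Hm] //=; rewrite /tr /=; case: a => //=; lra.
- split.
    by move=> s; case: s => [[|[|[|[|m]]]] Hm] //=; rewrite /ini /=; lra.
  by rewrite sum4 /= /ini /=; lra.
- by move=> a.
- by move=> a; rewrite /= /rw.
- move=> s a; case: s => [[|[|[|[|m]]]] Hm] //=; rewrite /rw /=; case: a => /=; lra.
- move=> pi _.
  apply/cvg_ex; exists (\sum_(k < 3) prob_nonterm MM pi k).
  apply: series_ev0 => k Hk.
  by rewrite -(subnK Hk) addn3 pn_late.
Qed.

Definition E (th : 'rV[R]_2) := pt th s1 true * Rmax.

Lemma inner_sum mu k (th : 'rV[R]_2) :
  \sum_s' sdist MM (pt th) mu k s' * exp_rew MM (pt th) s' = sdist MM (pt th) mu k s1 * E th.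
Proof.
rewrite sum4 /exp_rew /E !big_bool /= /rw /=; ring.
Qed.

Lemma trs0 s a : tr s a s0 = 0.
Proof. by case: s => [[|[|[|[|m]]]] Hm] //=; rewrite /tr /=; case: a. Qed.

Lemma Q_eq th s a : Qval g MM (pt th) s a =
  rw s a + (g * tr s a s1 + g^+2 * tr s a s2) * E th.
Proof.
rewrite /Qval (@lim_series_ev0 _ 3%N); last first.
  by move=> k Hk; rewrite inner_sum -(subnK Hk) addn3 sdlate mul0r mulr0.
under eq_bigr => k _ do rewrite inner_sum.
rewrite (sum3 (fun k => g ^+ k.+1 * (sdist MM (pt th) (trans MM s a) k s1 * E th))).
rewrite !sdS1 sdS0 sdS2 !sd0 /= !trs0 /pt /=.
by field.
Qed.

Lemma pp0 th b v (d Q : R) : d * pt th s0 b * psi_dir pt th s0 b v * Q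
  = d * (v ord0 ord0 * dA b (th ord0 ord0)) * Q.
Proof.
rewrite -(mulrA d) /psi_dir /pt /=.
by rewrite (@psi_coord ord0 (fA b) (dA b) th v (fA_gt0 b) (fA_der b)).
Qed.

Lemma pp1 th b v (d Q : R) : d * pt th s1 b * psi_dir pt th s1 b v * Q
  = d * (v ord0 i1 * dA b (th ord0 i1)) * Q.
Proof.
rewrite -(mulrA d) /psi_dir /pt /=.
by rewrite (@psi_coord i1 (fA b) (dA b) th v (fA_gt0 b) (fA_der b)).
Qed.

Lemma dcst0 (th v : 'rV[R]_2) (c : R) : 'd (fun _ : 'rV[R]_2 => c) th v = 0.
Proof.
have -> : (fun _ : 'rV[R]_2 => c) = cst c by [].
by rewrite diff_cst.
Qed.

Lemma pp2 th b v (d Q : R) : d * pt th s2 b * psi_dir pt th s2 b v * Q = 0.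
Proof. by rewrite /psi_dir /pt /= dcst0 mulr0 mul0r. Qed.

Lemma pp3 th b v (d Q : R) : d * pt th s3 b * psi_dir pt th s3 b v * Q = 0.
Proof. by rewrite /psi_dir /pt /= dcst0 mulr0 mul0r. Qed.

Lemma pipsi th s a v : pt th s a * psi_dir pt th s a v =
  if nat_of_ord s == 0%N then v ord0 ord0 * dA a (th ord0 ord0)
  else if nat_of_ord s == 1%N then v ord0 i1 * dA a (th ord0 i1) else 0.
Proof.
case: s => [[|[|[|[|m]]]] Hm] //=.
- exact: (@psi_coord ord0 (fA a) (dA a) th v (fA_gt0 a) (fA_der a)).
- exact: (@psi_coord i1 (fA a) (dA a) th v (fA_gt0 a) (fA_der a)).
- by rewrite /psi_dir /pt /= dcst0 mulr0.
- by rewrite /psi_dir /pt /= dcst0 mulr0.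
Qed.

Lemma reassoc (d p q Q : R) : d * p * q * Q = d * (p * q) * Q.
Proof. by rewrite mulrA. Qed.

Lemma term th v t :
  \sum_s \sum_a (sdist MM (pt th) (init MM) t s * pt th s a * psi_dir pt th s a v *
     Qval g MM (pt th) s a)
  = sdist MM (pt th) (init MM) t s1 * (v ord0 i1 * (cos (th ord0 i1) / 4) * Rmax).
Proof.
under eq_bigr => s _ do under eq_bigr => a _ do rewrite reassoc pipsi Q_eq.
rewrite sum4 !big_bool /= /rw /tr /dA /=.
by field.
Qed.

Lemma upd th v : update_dir g MM pt th v =
  (g * fA false (th ord0 ord0) + fA true (th ord0 ord0)) *
  (v ord0 i1 * (cos (th ord0 i1) / 4) * Rmax).
Proof.
rewrite /update_dir (_ : (fun t => _) = (fun t => sdist MM (pt th) (init MM) t s1 *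
   (v ord0 i1 * (cos (th ord0 i1) / 4) * Rmax))); last first.
  by apply/funext => t; rewrite term.
rewrite (@lim_series_ev0 _ 3%N); last first.
  by move=> k Hk; rewrite -(subnK Hk) addn3 sdlate mul0r.
rewrite (sum3 (fun t => sdist MM (pt th) (init MM) t s1 *
   (v ord0 i1 * (cos (th ord0 i1) / 4) * Rmax))).
rewrite !sdS1 sdS0 sdS2 !sd0 /= /ini /pt /=.
by field.
Qed.

Lemma ptdiff : is_diff_ppolicy pt.
Proof.
move=> th; split.
  move=> s; case: s => [[|[|[|[|m]]]] Hm] //=; split;
    try (move=> a; rewrite /pt /=; first [exact: ltW (fA_gt0 _ _) | lra]);
    rewrite big_bool /pt /= ?/fA /=; field; done.
move=> s a; case: s => [[|[|[|[|m]]]] Hm] //=; rewrite /pt /=;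
  try exact: differentiable_cst.
- have -> : (fun th' : 'rV[R]_2 => fA a (th' ord0 ord0)) = fA a \o coordL ord0 by [].
  apply: differentiable_comp; first exact/linear_differentiable/coordL_cont.
  by apply/derivable1_diffP; case: (fA_der a (th ord0 ord0)).
- have -> : (fun th' : 'rV[R]_2 => fA a (th' ord0 i1)) = fA a \o coordL i1 by [].
  apply: differentiable_comp; first exact/linear_differentiable/coordL_cont.
  by apply/derivable1_diffP; case: (fA_der a (th ord0 i1)).
Qed.


Lemma final1 : update_dir g MM pt ((0:'rV[R]_2) + (pi/2) *: delta_mx ord0 ord0) (delta_mx ord0 i1)
  = (g * (1/4) + 3/4) * (Rmax/4).
Proof.
rewrite upd !mxE /= !add0r mulr1 mulr0 /fA sin_pihalf cos0.
by field.
Qed.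

Lemma final0 : update_dir g MM pt 0 (delta_mx ord0 i1) = (g * (1/2) + 1/2) * (Rmax/4).
Proof.
rewrite upd !mxE /= /fA sin0 cos0.
by field.
Qed.

Lemma const_dir (V : normedModType R) (f : V -> R) (e1 : V) :
  (forall x, differentiable f x) -> (forall x, 'd f x e1 = 0) ->
  forall x t, f (x + t *: e1) = f x.
Proof.
move=> Hd U1 th t.
have := @is_derive_0_is_cst _ (fun s => f (th + s *: e1)) t 0.
rewrite scale0r addr0; apply => x.
apply: is_derive_eq; first exact: line_deriv (Hd _).
exact: U1.
Qed.

Lemma no_J (V : normedModType R) (f : V -> R) (e1 e2 : V) :
  (forall x, differentiable f x) -> (forall x, 'd f x e1 = 0) ->
  forall x t, 'd f (x + t *: e1) e2 = 'd f x e2.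
Proof.
move=> Hd U1 th t.
have C := @const_dir V f e1 Hd U1.
rewrite -(@deriveE R V R f _ e2 (Hd _)) -(@deriveE R V R f _ e2 (Hd _)) /derive.
have -> : (fun h : R => h^-1 *: ((f \o shift (th + t *: e1)) (h *: e2) - f (th + t *: e1)))
   = (fun h : R => h^-1 *: ((f \o shift th) (h *: e2) - f th)).
  by apply/funext => h /=; rewrite addrA C C.
by [].
Qed.

End Aux.

Theorem theorem4p2 (R : realType) (Rmax gamma : R) :
  0 < Rmax -> 0 <= gamma < 1 ->
  ~ exists J : forall (S A : finType) (n : nat),
                 mdp R S A -> ppolicy R S A n -> 'rV[R]_n -> R,
      forall (S A : finType) (M : mdp R S A), in_class Rmax M ->
      forall (n : nat) (pt : ppolicy R S A n), is_diff_ppolicy pt ->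
      forall th : 'rV[R]_n,
        differentiable (J S A n M pt) th /\
        forall v : 'rV[R]_n, 'd (J S A n M pt) th v = update_dir gamma M pt th v.
Proof.
move=> HR Hg [J HJ].
have Hc := @inclass R gamma Rmax HR Hg.
have H := fun th => HJ _ _ (MM R gamma Rmax) Hc 2%N (@pt R) (@ptdiff R) th.
set f := J _ _ 2%N (MM R gamma Rmax) (@pt R) in H.
have Hd th : differentiable f th := (H th).1.
have Hdv th v : 'd f th v = update_dir gamma (MM R gamma Rmax) (@pt R) th v := (H th).2 v.
pose e1 : 'rV[R]_2 := delta_mx ord0 ord0.
pose e2 : 'rV[R]_2 := delta_mx ord0 (@Ordinal 2 1 isT).
have U1 th : 'd f th e1 = 0.
  by rewrite Hdv upd /e1 mxE /= !mul0r mulr0.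
have E := @no_J R _ f e1 e2 Hd U1 0 (pi / 2).
have E' := etrans (esym (Hdv _ _)) (etrans E (Hdv _ _)).
have E'' := etrans (esym (@final1 R gamma Rmax)) (etrans E' (@final0 R gamma Rmax)).
move: E''; clear -HR Hg => E''.
have [g0 g1] := andP Hg.
have hp : 0 < (1 - gamma) * Rmax by apply: mulr_gt0 => //; lra.
have hq : (gamma * (1 / 4) + 3 / 4) * (Rmax / 4) - (gamma * (1 / 2) + 1 / 2) * (Rmax / 4)
  = (1 - gamma) * Rmax / 16 by field.
rewrite E'' subrr in hq.
lra.
Qed.
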